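(* Let $\mathbf x_1,\dots,\mathbf x_l\in\mathbb{R}^n$, $y_1,\dots,y_l\in\{1,-1\}$, $\bar{\mathbf x}_i=y_i\mathbf x_i$. For $s>0$ let $\mathcal F_s=\{\mathbf w\in\mathbb{R}^n:\sum_{i=1}^l[1-y_i\mathbf w^T\mathbf x_i]_+\le s\}$ and, when $\mathcal F_s\neq\emptyset$, let $\mathbf w^*(s)$ be the optimal solution of $\min_{\mathbf w\in\mathcal F_s}\frac12\|\mathbf w\|^2$. Let $s_a>s_b>0$, let $\mathbf w^*(s_a)$ be the optimal solution at $s=s_a$ (assumed nonzero) and $\hat{\mathbf w}(s_b)\in\mathcal F_{s_b}$ a feasible point at $s=s_b$. Define $$\rho=-\|\mathbf w^*(s_a)\|^2+\tfrac12\langle\mathbf w^*(s_a),\hat{\mathbf w}(s_b)\rangle,\qquad \mathbf v^\perp=\mathbf v-\tfrac{\mathbf v^T\mathbf w^*(s_a)}{\|\mathbf w^*(s_a)\|^2}\mathbf w^*(s_a)\ \ (\mathbf v\in\mathbb{R}^n),$$ $$\ell_i=-\tfrac{\langle\mathbf w^*(s_a),\bar{\mathbf x}_i\rangle}{\|\mathbf w^*(s_a)\|^2}\rho+\tfrac12\langle\hat{\mathbf w}(s_b),\bar{\mathbf x}_i\rangle-\|\bar{\mathbf x}_i^\perp\|\sqrt{\tfrac14\|\hat{\mathbf w}(s_b)\|^2-\tfrac{\rho^2}{\|\mathbf w^*(s_a)\|^2}},$$ and $u_i=\tfrac12\big(\langle\hat{\mathbf w}(s_b),\bar{\mathbf x}_i\rangle+\|\hat{\mathbf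 w}(s_b)\|\|\bar{\mathbf x}_i\|\big)$ if $\langle\mathbf w^*(s_a),\bar{\mathbf x}_i\rangle\ge-\tfrac{2\|\bar{\mathbf x}_i\|}{\|\hat{\mathbf w}(s_b)\|}\rho$, and otherwise $$u_i=-\tfrac{\langle\mathbf w^*(s_a),\bar{\mathbf x}_i\rangle}{\|\mathbf w^*(s_a)\|^2}\rho+\tfrac12\langle\hat{\mathbf w}(s_b),\bar{\mathbf x}_i\rangle+\|\bar{\mathbf x}_i^\perp\|\sqrt{\tfrac14\|\hat{\mathbf w}(s_b)\|^2-\tfrac{\rho^2}{\|\mathbf w^*(s_a)\|^2}}.$$ Then for all $s\in[s_b,s_a]$: if $\langle\mathbf w^*(s_a),\bar{\mathbf x}_i\rangle>\tfrac{2\|\bar{\mathbf x}_i\|}{\|\hat{\mathbf w}(s_b)\|}\rho$ and $\ell_i>1$, then $\langle\mathbf w^*(s),\bar{\mathbf x}_i\rangle>1$ (i.e., $i\in\mathcal R$); and if $u_i<1$, then $\langle\mathbf w^*(s),\bar{\mathbf x}_i\rangle<1$ (i.e., $i\in\mathcal L$).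
   Context: $[t]_+=\max\{t,0\}$; $\|\cdot\|$ is the Euclidean norm. For the parameter $s$, $\mathcal R=\{i:\langle\mathbf w^*(s),\bar{\mathbf x}_i\rangle>1\}$ and $\mathcal L=\{i:\langle\mathbf w^*(s),\bar{\mathbf x}_i\rangle<1\}$ (non-support vectors). *)

(* Defs.v *)
From mathcomp Require Import all_boot all_order all_algebra.
Set Implicit Arguments. Unset Strict Implicit. Unset Printing Implicit Defensive.
Import Order.TTheory GRing.Theory Num.Theory.
Local Open Scope ring_scope.

Section SVM.
Variables (R : rcfType) (n : nat).

Definition dotp (u v : 'rV[R]_n) : R := \sum_(j < n) u 0 j * v 0 j.
Definition enorm (u : 'rV[R]_n) : R := Num.sqrt (dotp u u).

Definition hinge (t : R) : R := Num.max t 0.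

Variable l : nat.
Variables (x : 'I_l -> 'rV[R]_n) (y : 'I_l -> R).

Definition xbar (i : 'I_l) : 'rV[R]_n := y i *: x i.

Definition feasible (s : R) (w : 'rV[R]_n) : Prop :=
  \sum_(i < l) hinge (1 - y i * dotp w (x i)) <= s.

Definition optimal (s : R) (w : 'rV[R]_n) : Prop :=
  feasible s w /\
  forall v, feasible s v -> (enorm w) ^+ 2 / 2 <= (enorm v) ^+ 2 / 2.

(* rho, perp, l_i, u_i, given wa = w*(s_a) and wh = w_hat(s_b) *)
Definition rho (wa wh : 'rV[R]_n) : R :=
  - (enorm wa) ^+ 2 + dotp wa wh / 2.

Definition perp (wa v : 'rV[R]_n) : 'rV[R]_n :=
  v - (dotp v wa / (enorm wa) ^+ 2) *: wa.

Definition sqrt_term (wa wh : 'rV[R]_n) : R :=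
  Num.sqrt ((enorm wh) ^+ 2 / 4 - (rho wa wh) ^+ 2 / (enorm wa) ^+ 2).

Definition lower_i (wa wh : 'rV[R]_n) (i : 'I_l) : R :=
  - (dotp wa (xbar i) / (enorm wa) ^+ 2) * rho wa wh
  + dotp wh (xbar i) / 2
  - enorm (perp wa (xbar i)) * sqrt_term wa wh.

Definition upper_i (wa wh : 'rV[R]_n) (i : 'I_l) : R :=
  if dotp wa (xbar i) >= - (2 * enorm (xbar i) / enorm wh) * rho wa wh
  then (dotp wh (xbar i) + enorm wh * enorm (xbar i)) / 2
  else - (dotp wa (xbar i) / (enorm wa) ^+ 2) * rho wa wh
       + dotp wh (xbar i) / 2
       + enorm (perp wa (xbar i)) * sqrt_term wa wh.

End SVM.

(* Main.v *)
Require Import Defs.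
From mathcomp Require Import all_boot all_order all_algebra.
From mathcomp Require Import ring lra.
Import Order.TTheory GRing.Theory Num.Theory.
Set Implicit Arguments. Unset Strict Implicit.
Local Open Scope ring_scope.

Lemma key_scalar (R : rcfType) (A b rh t q p S r nb : R) :
 0 < A -> 0 <= q -> 0 <= p -> 0 <= S -> 0 <= r -> 0 <= nb ->
 -rh <= t -> A*q^+2 + t^+2 <= A*r^+2 -> A*S^+2 + rh^+2 = A*r^+2 ->
 A*nb^+2 = b^+2 + A* p^+2 ->
 nb*rh < b*r -> (0 < rh -> rh^+2 < A*r^+2) ->
 0 <= b*(t+rh) + A* p*(S-q).
Proof.
move=> hA hq hp hS hr hnb ht hz hSd hnbd hc h6.
have hbs : p*rh <= b*S.
  have eA : A*(b*r)^+2 - A*(nb*rh)^+2 = A*((b*S)^+2 - (p*rh)^+2).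
    have -> : A*(b*r)^+2 = b^+2 * (A*r^+2) by ring.
    have -> : A*(nb*rh)^+2 = (A*nb^+2)*rh^+2 by ring.
    rewrite -hSd hnbd; ring.
  case: (lerP rh 0) => hrh.
  - case: (lerP 0 (b*S)) => hbS; first by nra.
    have hb : b < 0 by nra.
    have h0 : 0 <= -(b*r) by nra.
    have h0' : -(b*r) < -(nb*rh) by lra.
    have h1 : (b*r)^+2 < (nb*rh)^+2 by nra.
    have h2 : (b*S)^+2 < (p*rh)^+2 by nra.
    have h3 : 0 <= -(p*rh) by nra.
    nra.
  - have hbr : 0 < b*r by nra.
    have h0 : 0 <= nb*rh by rewrite mulr_ge0 // ltW.
    have h1 : (nb*rh)^+2 < (b*r)^+2 by nra.
    have h2 : (p*rh)^+2 < (b*S)^+2 by nra.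
    have hb : 0 < b by nra.
    have h3 : 0 <= b*S by rewrite mulr_ge0 // ltW.
    have h4 : 0 <= p*rh by rewrite mulr_ge0 // ltW.
    nra.
case: (ltrP 0 S) => hS0.
- have hh1 : 0 <= (rh+t)^+2 by apply: sqr_ge0.
  have hh2 : 0 <= A*(S-q)^+2 by rewrite mulr_ge0 ?sqr_ge0 // ltW.
  have hq2 : -rh*t + A*S*q <= A*r^+2 by nra.
  have e : S*(b*(t+rh) + A* p*(S-q)) = (b*S - p*rh)*(t+rh) + p*(rh*t + A*r^+2 - A*S*q).
    rewrite -hSd; ring.
  have : 0 <= S*(b*(t+rh) + A* p*(S-q)) by rewrite e; nra.
  nra.
- have S0 : S = 0 by apply/eqP; rewrite eq_le hS0 hS.
  rewrite S0 in hSd.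
  have hrh : rh <= 0.
    rewrite leNgt; apply/negP => /h6; nra.
  rewrite expr0n /= mulr0 add0r in hSd.
  have hAq : 0 <= A*q^+2 by rewrite mulr_ge0 ?sqr_ge0 // ltW.
  have ht3 : t^+2 <= rh^+2 by lra.
  have ht4 : t <= -rh by nra.
  have ht2 : t = -rh by lra.
  rewrite ht2 sqrrN in hz.
  have hq1 : A*q^+2 <= 0 by lra.
  have hq3 : q^+2 <= 0 by nra.
  have hq0 : q = 0 by nra.
  rewrite ht2 hq0 S0; nra.
Qed.


Section Aux.
Variables (R : rcfType) (n : nat).
Implicit Types u v w : 'rV[R]_n.

Lemma dotpC u v : dotp u v = dotp v u.
Proof. by apply: eq_bigr => j _; rewrite mulrC. Qed.
Lemma dotpDl u v w : dotp (u + v) w = dotp u w + dotp v w.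
Proof. by rewrite /dotp -big_split; apply: eq_bigr => j _; rewrite mxE mulrDl. Qed.
Lemma dotpZl k u v : dotp (k *: u) v = k * dotp u v.
Proof. by rewrite /dotp mulr_sumr; apply: eq_bigr => j _; rewrite mxE mulrA. Qed.
Lemma dotpNl u v : dotp (- u) v = - dotp u v.
Proof. by rewrite -scaleN1r dotpZl mulN1r. Qed.
Lemma dotpBl u v w : dotp (u - v) w = dotp u w - dotp v w.
Proof. by rewrite dotpDl dotpNl. Qed.
Lemma dotpDr u v w : dotp w (u + v) = dotp w u + dotp w v.
Proof. by rewrite dotpC dotpDl !(dotpC w). Qed.
Lemma dotpZr k u v : dotp v (k *: u) = k * dotp v u.
Proof. by rewrite dotpC dotpZl dotpC. Qed.
Lemma dotpNr u v : dotp v (- u) = - dotp v u.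
Proof. by rewrite dotpC dotpNl dotpC. Qed.
Lemma dotpBr u v w : dotp w (u - v) = dotp w u - dotp w v.
Proof. by rewrite dotpDr dotpNr. Qed.
Lemma dotp0l v : dotp 0 v = 0.
Proof. by rewrite /dotp big1 // => j _; rewrite mxE mul0r. Qed.
Lemma dotp_ge0 u : 0 <= dotp u u.
Proof. by apply: sumr_ge0 => j _; rewrite -expr2 sqr_ge0. Qed.
Lemma dotp_eq0 u : dotp u u = 0 -> u = 0.
Proof.
move=> /eqP; rewrite psumr_eq0 => [/allP H|j _]; last by rewrite -expr2 sqr_ge0.
apply/matrixP => i j; rewrite ord1 mxE.
have /= := H j (mem_index_enum j).
by rewrite mulf_eq0 orbb => /eqP.
Qed.
Lemma enorm_sq u : enorm u ^+ 2 = dotp u u.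
Proof. exact: sqr_sqrtr (dotp_ge0 u). Qed.
Lemma enorm_ge0 u : 0 <= enorm u.
Proof. exact: sqrtr_ge0. Qed.

Lemma cs u v : dotp u v ^+ 2 <= dotp u u * dotp v v.
Proof.
case: (ltrP 0 (dotp v v)) => hv.
  have H := dotp_ge0 (u - (dotp u v / dotp v v) *: v).
  rewrite !(dotpBl, dotpBr, dotpZl, dotpZr) (dotpC v u) in H.
  set k := dotp u v / dotp v v in H.
  have hk : k * dotp v v = dotp u v by rewrite /k divfK // gt_eqF.
  nra.
have v0 : v = 0 by apply: dotp_eq0; apply/eqP; rewrite eq_le hv dotp_ge0.
by rewrite v0 dotpC !dotp0l expr0n /= mulr0.
Qed.

Lemma cs_le u v : dotp u v <= enorm u * enorm v.
Proof.
have := cs u v; rewrite -!enorm_sq -exprMn => h.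
have hy : 0 <= enorm u * enorm v by rewrite mulr_ge0 ?enorm_ge0.
move: h hy; set X := dotp u v; set Y := enorm u * enorm v => h hy.
nra.
Qed.

End Aux.


Section Feas.
Variables (R : rcfType) (n l : nat) (x : 'I_l -> 'rV[R]_n) (y : 'I_l -> R).

Lemma hinge_conv (k a b : R) : 0 <= k -> k <= 1 ->
  hinge ((1 - k) * a + k * b) <= (1 - k) * hinge a + k * hinge b.
Proof.
move=> h0 h1; rewrite /hinge ge_max; apply/andP; split.
- apply: lerD; apply: ler_wpM2l; rewrite ?subr_ge0 // le_max lexx //.
- apply: addr_ge0; apply: mulr_ge0; rewrite ?subr_ge0 // le_max lexx orbT //.
Qed.

Lemma feas_conv s w0 v k : feasible x y s w0 -> feasible x y s v ->
  0 <= k -> k <= 1 -> feasible x y s (w0 + k *: (v - w0)).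
Proof.
rewrite /feasible => hw hv h0 h1.
apply: le_trans (_ : (1 - k) * s + k * s <= s); last by lra.
apply: le_trans (_ : (1 - k) * \sum_(i < l) hinge (1 - y i * dotp w0 (x i))
   + k * \sum_(i < l) hinge (1 - y i * dotp v (x i)) <= _); last first.
  apply: lerD; apply: ler_wpM2l; rewrite ?subr_ge0 //.
rewrite !mulr_sumr -big_split; apply: ler_sum => i _.
rewrite dotpDl dotpZl dotpBl.
have -> : 1 - y i * (dotp w0 (x i) + k * (dotp v (x i) - dotp w0 (x i)))
  = (1 - k) * (1 - y i * dotp w0 (x i)) + k * (1 - y i * dotp v (x i)) by ring.
exact: hinge_conv.
Qed.

Lemma opt_var s w0 v : optimal x y s w0 -> feasible x y s v ->
  0 <= dotp w0 (v - w0).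
Proof.
case=> hf ho hv; rewrite leNgt; apply/negP => hd.
have he := dotp_ge0 (v - w0).
move: hd he; set d := dotp w0 (v - w0); set e := dotp (v - w0) (v - w0) => hd he.
have hed : 0 < e - d by lra.
set k := - d / (e - d).
have hk : k * (e - d) = - d by rewrite /k divfK // gt_eqF.
have hk0 : 0 < k by rewrite /k divr_gt0 // oppr_gt0.
have hk1 : k <= 1 by nra.
have := ho _ (feas_conv hf hv (ltW hk0) hk1).
have E : dotp (w0 + k *: (v - w0)) (w0 + k *: (v - w0)) = dotp w0 w0 + 2*k*d + k^+2*e.
  rewrite /d /e; move: (v - w0) => V.
  rewrite dotpDl !dotpDr !dotpZl !dotpZr (dotpC V w0); ring.
rewrite !enorm_sq E.
have hke : k * e <= - d by nra.
nra.
Qed.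

End Feas.


Section Core.
Variables (R : rcfType) (n : nat).

Lemma enormN (u : 'rV[R]_n) : enorm (- u) = enorm u.
Proof. by rewrite /enorm dotpNl dotpNr opprK. Qed.

Lemma core (a wh ws b : 'rV[R]_n) :
  0 < dotp a a -> dotp ws ws <= dotp ws wh -> dotp a a <= dotp a ws ->
  enorm b * rho a wh < dotp a b * (enorm wh / 2) ->
  - (dotp a b / enorm a ^+ 2) * rho a wh + dotp wh b / 2
   - enorm (perp a b) * sqrt_term a wh <= dotp ws b.
Proof.
move=> hA F1 F2 hc.
rewrite /sqrt_term /perp /rho in hc *; rewrite !enorm_sq in hc *.
have hA0 : dotp a a != 0 by rewrite gt_eqF.
set r := enorm wh / 2 in hc *.
have hr0 : 0 <= r by rewrite divr_ge0 ?enorm_ge0.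
have hr2 : r ^+ 2 = dotp wh wh / 4.
  by rewrite /r expr_div_n enorm_sq; congr (_ / _); rewrite -natrX.
set t := dotp a ws - dotp a wh / 2.
set bp := b - (dotp b a / dotp a a) *: a.
set zp := ws - 2^-1 *: wh - (t / dotp a a) *: a.
have hq2 : dotp a a * enorm zp ^+ 2 + t ^+ 2
   = dotp a a * (dotp ws ws - dotp ws wh + dotp wh wh / 4).
  rewrite enorm_sq /zp /t !(dotpBl, dotpBr, dotpZl, dotpZr).
  rewrite (dotpC wh ws) (dotpC ws a) (dotpC wh a).
  by field.
have hp2 : dotp a a * enorm b ^+ 2 = dotp a b ^+ 2 + dotp a a * enorm bp ^+ 2.
  rewrite !enorm_sq /bp !(dotpBl, dotpBr, dotpZl, dotpZr) (dotpC b a).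
  by field.
have hzb : dotp zp bp = dotp ws b - dotp wh b / 2 - t * dotp a b / dotp a a.
  rewrite /zp /bp /t !(dotpBl, dotpBr, dotpZl, dotpZr).
  rewrite (dotpC wh a) (dotpC ws a) (dotpC b a).
  by field.
have hcs : - (enorm zp * enorm bp) <= dotp zp bp.
  have := cs_le (- zp) bp; rewrite enormN dotpNl; lra.
set rh := - dotp a a + dotp a wh / 2 in hc *.
have ht : - rh <= t by rewrite /rh /t; lra.
have h6 : 0 < rh -> rh ^+ 2 < dotp a a * r ^+ 2.
  move=> hrh.
  have := cs a wh.
  have -> : dotp a wh = 2 * (rh + dotp a a) by rewrite /rh; field.
  rewrite hr2 => h; nra.
have hzq : 0 <= enorm zp ^+ 2 by apply: sqr_ge0.
have hbig : dotp a a * enorm zp ^+ 2 + t ^+ 2 <= dotp a a * r ^+ 2.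
  rewrite hq2 hr2; apply: ler_wpM2l; [exact: ltW | lra].
have hrr : rh ^+ 2 <= dotp a a * r ^+ 2.
  case: (ltrP 0 rh) => hrh; first by apply: ltW; apply: h6.
  have : 0 <= dotp a a * enorm zp ^+ 2 by rewrite mulr_ge0 // ltW.
  nra.
have hsq : 0 <= dotp wh wh / 4 - rh ^+ 2 / dotp a a.
  rewrite -hr2 subr_ge0 ler_pdivrMr // mulrC //.
set S := Num.sqrt (dotp wh wh / 4 - rh ^+ 2 / dotp a a).
have hS0 : 0 <= S := sqrtr_ge0 _.
have hS2 : dotp a a * S ^+ 2 + rh ^+ 2 = dotp a a * r ^+ 2.
  rewrite /S sqr_sqrtr // hr2; by field.
have := key_scalar hA (enorm_ge0 zp) (enorm_ge0 bp) hS0 hr0 (enorm_ge0 b)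
   ht hbig hS2 hp2 hc h6.
move: hcs; rewrite hzb.
set q := enorm zp; set p := enorm bp; set be := dotp a b => hcs hkey.
have E : (be * (t + rh) + dotp a a * p * (S - q)) / dotp a a
  = be / dotp a a * (t + rh) + p * (S - q) by field.
have : 0 <= (be * (t + rh) + dotp a a * p * (S - q)) / dotp a a
  by rewrite divr_ge0 // ltW.
rewrite E.
have E2 : t * be / dotp a a = be / dotp a a * t by field.
rewrite E2 in hcs.
lra.
Qed.
End Core.

Unset Implicit Arguments.
Theorem theorem5 (R : rcfType) (n l : nat)
  (x : 'I_l -> 'rV[R]_n) (y : 'I_l -> R)
  (hy : forall i, y i = 1 \/ y i = -1)
  (sa sb : R) (wa wh : 'rV[R]_n)
  (hsb : 0 < sb) (hsab : sb < sa)
  (hwa : optimal x y sa wa) (hwa0 : wa != 0)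
  (hwh : feasible x y sb wh) :
  forall s : R, sb <= s <= sa ->
  forall ws : 'rV[R]_n, optimal x y s ws ->
  forall i : 'I_l,
    (dotp wa (xbar x y i) > 2 * enorm (xbar x y i) / enorm wh * rho wa wh ->
     lower_i x y wa wh i > 1 -> dotp ws (xbar x y i) > 1) /\
    (upper_i x y wa wh i < 1 -> dotp ws (xbar x y i) < 1).
Proof.
move=> s /andP[hs1 hs2] ws hws i.
have hA : 0 < dotp wa wa.
  rewrite lt_neqAle dotp_ge0 andbT eq_sym; apply/eqP => /dotp_eq0 h.
  by rewrite h eqxx in hwa0.
have hwhs : feasible x y s wh by apply: le_trans hwh hs1.
have hwss : feasible x y sa ws by apply: le_trans hws.1 hs2.
have F1 : dotp ws ws <= dotp ws wh.
  have := opt_var hws hwhs; rewrite dotpBr; lra.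
have F2 : dotp wa wa <= dotp wa ws.
  have := opt_var hwa hwss; rewrite dotpBr; lra.
have hW : 0 < enorm wh.
  rewrite sqrtr_gt0 lt_neqAle dotp_ge0 andbT eq_sym; apply/eqP => /dotp_eq0 h.
  rewrite h dotpC dotp0l in F1.
  have /dotp_eq0 h2 : dotp ws ws = 0 by apply/eqP; rewrite eq_le F1 dotp_ge0.
  by rewrite h2 dotpC dotp0l in F2; lra.
set b := xbar x y i.
set W := enorm wh in hW *.
have hWs : 0 < W / 2 by rewrite divr_gt0.
split.
- move=> h1 h2.
  have hc : enorm b * rho wa wh < dotp wa b * (W / 2).
    have E : 2 * enorm b / W * rho wa wh * (W / 2) = enorm b * rho wa wh.
      by field; rewrite gt_eqF.
    by rewrite -E ltr_pM2r.
  have := core hA F1 F2 hc.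
  rewrite /lower_i -/b -/W in h2; lra.
- rewrite /upper_i -/b -/W; case: ifP => hcond hu.
  + set z := ws - 2^-1 *: wh.
    have hz : enorm z <= W / 2.
      have e1 : enorm z ^+ 2 = dotp ws ws - dotp ws wh + dotp wh wh / 4.
        rewrite enorm_sq /z !(dotpBl, dotpBr, dotpZl, dotpZr) (dotpC wh ws); by field.
      have e2 : (W / 2) ^+ 2 = dotp wh wh / 4.
        by rewrite expr_div_n /W enorm_sq; congr (_ / _); rewrite -natrX.
      have := enorm_ge0 z; nra.
    have hzb := cs_le z b.
    have e3 : dotp z b = dotp ws b - dotp wh b / 2.
      rewrite /z dotpBl dotpZl; by field.
    have := enorm_ge0 b.
    nra.
  + have hc : enorm (- b) * rho wa wh < dotp wa (- b) * (W / 2).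
      rewrite enormN dotpNr.
      have {}hcond : dotp wa b < - (2 * enorm b / W) * rho wa wh.
        by rewrite ltNge hcond.
      have E : - (2 * enorm b / W) * rho wa wh * (W / 2) = - (enorm b * rho wa wh).
        by field; rewrite gt_eqF.
      have := ltr_pM2r hWs (dotp wa b) (- (2 * enorm b / W) * rho wa wh).
      rewrite hcond E => /esym h; lra.
    have := core hA F1 F2 hc.
    have ep : enorm (perp wa (- b)) = enorm (perp wa b).
      by rewrite /perp dotpNl mulNr scaleNr -opprD enormN.
    rewrite ep !dotpNr; lra.
Qed.
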